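(* Let $k$ be a field, $t\ge1$, $n_1,\dots,n_t\ge1$, $d\ge2$ integers, and for each $s$ let $I_s=[\alpha_s,\beta_s]\cap\mathbb Z$ be an interval contained in $\{0,1,\dots,n_s\}$. Let $K^{d(I_1,\dots,I_t)}_{n_1,\dots,n_t}$ be the $d(I_1,\dots,I_t)$-complete multipartite hypergraph. Then $R/I(K^{d(I_1,\dots,I_t)}_{n_1,\dots,n_t})$ has a linear resolution, and for $i\ge1$, $\beta_{i,j}(K^{d(I_1,\dots,I_t)}_{n_1,\dots,n_t})\ne0$ only if $j=i+(d-1)$.
   Context: The $d(I_1,\dots,I_t)$-complete multipartite hypergraph has vertex set $B_1\sqcup\cdots\sqcup B_t$ (pairwise disjoint, $|B_s|=n_s$) and as edges all $d$-element subsets $E$ such that $|E\cap B_s|\in I_s$ for every $s$. For a hypergraph on a finite set $X$, $R=k[x_v:v\in X]$, the edge ideal $I(\mathcal H)$ is generated by $\prod_{v\in E}x_v$, $E$ an edge, and $\beta_{i,j}(\mathcal H)=\dim_k\mathrm{Tor}^R_i(R/I(\mathcal H),k)_j$. $R/I$ has a linear resolution if there is $c$ with $\beta_{i,j}=0$ for all $i\ge1$ and $j\ne i+c-1$. *)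

(* Defs.v *)
From HB Require Import structures.
From mathcomp Require Import all_boot all_order all_algebra.
Set Implicit Arguments. Unset Strict Implicit. Unset Printing Implicit Defensive.
Import GRing.Theory.
Local Open Scope ring_scope.

(* on {set X}.  R = k[x_v : v in X] with the standard grading.               *)
(* Monomials are exponent vectors X -> nat.                                  *)

Section Koszul.
Variables (k : fieldType) (X : finType) (edge : pred {set X}).

(* the monomial x^a (a : X -> nat) lies in the monomial ideal I(H) iff it is
   divisible by prod_{v in E} x_v for some edge E *)
Definition in_edge_ideal (a : X -> nat) : bool :=
  [exists E : {set X}, edge E && [forall v in E, 0 < a v]%N].

(* Graded pieces of the Koszul complex K(x_v : v in X) (x) R/I(H), which
   computes Tor^R_i(R/I(H), k) (the Koszul complex is the minimal free
   resolution of k).  In internal degree j, homological degree i, a k-basis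
   is given by pairs (F, a) with F an i-subset of X (the wedge e_F) and x^a a
   standard monomial (not in I(H)) of degree j - i (a basis of (R/I)_{j-i}).
   Exponents are bounded by j, which is harmless since deg a = j - i <= j. *)
Definition kbasis_type (j : nat) := ({set X} * {ffun X -> 'I_j.+1})%type.

Definition kbasis (i j : nat) : {set kbasis_type j} :=
  [set x : kbasis_type j | [&& (i <= j)%N, #|x.1| == i,
               (\sum_(v : X) (x.2 v : nat))%N == (j - i)%N &
               ~~ in_edge_ideal (fun v => x.2 v : nat)]].

(* coefficient of e_G (x) x^b in d(e_F (x) x^a), where
   d(e_F (x) m) = sum_{v in F} (-1)^{#{u in F | u < v}} e_{F \ v} (x) x_v m
   (terms with x_v m in I(H) vanish in R/I(H) and are not basis elements) *)
Definition kcoef (j : nat) (x y : kbasis_type j) : k :=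
  \sum_(v in x.1)
    if (y.1 == x.1 :\ v) &&
       [forall u, (y.2 u : nat) == (x.2 u + (u == v))%N]
    then (-1) ^+ #|[set u in x.1 | (enum_rank u < enum_rank v)%N]|
    else 0.

(* the differential K_i -> K_{i-1} in internal degree j, as a matrix acting on
   row vectors *)
Definition kdiff (i j : nat) : 'M[k]_(#|kbasis i j|, #|kbasis i.-1 j|) :=
  \matrix_(r, c) kcoef (enum_val r) (enum_val c).

(* beta_{i,j} = dim_k Tor_i^R(R/I(H), k)_j = dim (ker d_i / im d_{i+1}),
   for i >= 1 *)
Definition betti (i j : nat) : nat :=
  (\rank (kermx (kdiff i j)) - \rank (kdiff i.+1 j))%N.

End Koszul.

Definition linear_resolution (b : nat -> nat -> nat) : Prop :=
  exists c : nat, forall i j : nat, (1 <= i)%N -> j <> (i + c - 1)%N -> b i j = 0%N.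

(* vertex set B_1 |_| ... |_| B_t, |B_s| = n s; a vertex is (s, index in B_s) *)
Definition cmh_vertex (t : nat) (n : 'I_t -> nat) : finType :=
  {s : 'I_t & 'I_(n s)}.

Definition cmh_edge (t : nat) (n : 'I_t -> nat) (alpha beta : 'I_t -> nat)
    (d : nat) : pred {set cmh_vertex n} :=
  fun E => (#|E| == d) &&
    [forall s : 'I_t, (alpha s <= #|[set v in E | tag v == s]| <= beta s)%N].
Arguments cmh_edge [t] n alpha beta d _.

(* Main.v *)
From HB Require Import structures.
From mathcomp Require Import all_boot all_order all_algebra zify.
Require Import Defs.
Set Implicit Arguments. Unset Strict Implicit. Unset Printing Implicit Defensive.

Module Part1.
Import GRing.Theory.
Local Open Scope ring_scope.

Lemma rank_tri (k : fieldType) (m n : nat) (M : 'M[k]_(m,n)) (I : finType)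
  (f : I -> 'I_m) (g : I -> 'I_n) (key : I -> nat) :
  (forall x, M (f x) (g x) != 0) ->
  (forall x y, M (f x) (g y) != 0 -> x = y \/ (key x < key y)%N) ->
  (#|I| <= \rank M)%N.
Proof.
move=> Hd Ht.
pose N : 'M[k]_(#|I|, #|I|) := mxsub (f \o enum_val) (g \o enum_val) M.
have Hf : row_free N.
  apply: inj_row_free => u Hu.
  apply/rowP => b0; rewrite mxE; apply/eqP; apply: contraT => Hb0.
  pose S : pred _ := fun b => u 0 b != 0.
  have Sb0 : S b0 by exact: Hb0.
  case: (arg_minnP (fun b => key (enum_val b)) Sb0) => b Sb Hmin.
  have : (u *m N) 0 b = u 0 b * N b b.
    rewrite [LHS]mxE (bigD1 b) //= big1 ?addr0 // => a Hab.
    have [->|Hua] := eqVneq (u 0 a) 0; first by rewrite mul0r.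
    rewrite mxE /=.
    have [HN|HN] := eqVneq (M (f (enum_val a)) (g (enum_val b))) 0.
      by rewrite HN mulr0.
    case: (Ht _ _ HN) => [/enum_val_inj Eab|Hk]; first by rewrite Eab eqxx in Hab.
    have := Hmin a Hua; by rewrite leqNgt Hk.
  rewrite Hu mxE => /esym /eqP; rewrite mulf_eq0 (negbTE Sb) /= mxE.
  by rewrite (negbTE (Hd _)).
rewrite -(eqP Hf).
have -> : N = rowsub (f \o enum_val) 1%:M *m colsub (g \o enum_val) M.
  by rewrite /N -mxsub_mul mul1mx.
apply: leq_trans (mxrankM_maxr _ _) _.
rewrite -[X in mxsub _ _ X]mulmx1 mxsub_mul.
apply: leq_trans (mxrankM_maxl _ _) _.
by rewrite mxsub_id.
Qed.

End Part1.
Import Part1.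

Module Part2.
Import GRing.Theory.
Local Open Scope ring_scope.

Section Gen.
Variables (k : fieldType) (X : finType) (edge : pred {set X}) (i j : nat).
Local Notation K := (kbasis edge).
Local Notation T := (kbasis_type X j).

Lemma betti0 (Up Down : pred T) (U D : T -> T) (key : T -> nat) :
 (forall x, x \in K i j -> Up x || Down x) ->
 (forall x, x \in K i j -> Up x -> U x \in K i.+1 j) ->
 (forall x, x \in K i j -> Down x -> D x \in K i.-1 j) ->
 (forall x, x \in K i j -> Up x -> kcoef k (U x) x != 0) ->
 (forall x, x \in K i j -> Down x -> kcoef k x (D x) != 0) ->
 (forall x y, x \in K i j -> y \in K i j -> Up x -> Up y ->
    kcoef k (U x) y != 0 -> y = x \/ (key x < key y)%N) ->
 (forall x y, x \in K i j -> y \in K i j -> Down x -> Down y ->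
    kcoef k x (D y) != 0 -> y = x \/ (key x < key y)%N) ->
 betti k edge i j = 0%N.
Proof.
move=> Hcov HU HD HdU HdD HtU HtD.
pose m := #|K i j|.
pose PU := [pred p : 'I_m | Up (enum_val p)].
pose PD := [pred p : 'I_m | Down (enum_val p)].
have rU : (#|PU| <= \rank (kdiff k edge i.+1 j))%N.
  case: (pickP PU) => [p0 Hp0 | H0]; last by rewrite (eq_card0 H0).
  have z0 : U (enum_val p0) \in K i.+1 j by apply: HU => //; exact: enum_valP.
  rewrite -card_sig.
  apply: (@rank_tri _ _ _ _ _ (fun q => enum_rank_in z0 (U (enum_val (val q))))
     (fun q => val q) (fun q => key (enum_val (val q)))).
  - move=> q; rewrite mxE enum_rankK_in; last by apply: HU => //; [exact: enum_valP | exact: (valP q)].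
    by apply: HdU; [exact: enum_valP | exact: (valP q)].
  - move=> q q'; rewrite mxE enum_rankK_in; last by apply: HU => //; [exact: enum_valP | exact: (valP q)].
    move=> H; case: (HtU _ _ (enum_valP _) (enum_valP _) (valP q) (valP q') H) => [E|]; last by right.
    by left; apply: val_inj; apply: enum_val_inj.
have rD : (#|PD| <= \rank (kdiff k edge i j))%N.
  case: (pickP PD) => [p0 Hp0 | H0]; last by rewrite (eq_card0 H0).
  have z0 : D (enum_val p0) \in K i.-1 j by apply: HD => //; exact: enum_valP.
  rewrite -card_sig.
  apply: (@rank_tri _ _ _ _ _ (fun q => val q) (fun q => enum_rank_in z0 (D (enum_val (val q))))
     (fun q => key (enum_val (val q)))).
  - move=> q; rewrite mxE enum_rankK_in; last by apply: HD => //; [exact: enum_valP | exact: (valP q)].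
    by apply: HdD; [exact: enum_valP | exact: (valP q)].
  - move=> q q'; rewrite mxE enum_rankK_in; last by apply: HD => //; [exact: enum_valP | exact: (valP q')].
    move=> H; case: (HtD _ _ (enum_valP _) (enum_valP _) (valP q) (valP q') H) => [E|]; last by right.
    by left; apply: val_inj; apply: enum_val_inj.
have Hc : (m <= #|PU| + #|PD|)%N.
  rewrite -cardUI; apply: leq_trans (leq_addr _ _).
  apply: (@leq_trans #|'I_m|); first by rewrite card_ord.
  apply: subset_leq_card; apply/subsetP => p _.
  by rewrite !inE; apply: Hcov; exact: enum_valP.
rewrite /betti mxrank_ker.
rewrite -/m in rD Hc *; apply/eqP; rewrite subn_eq0 leq_subLR.
apply: leq_trans Hc _; rewrite addnC; exact: leq_add.
Qed.
End Gen.

End Part2.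
Import Part2.

Module Part3.
Import GRing.Theory.
Local Open Scope ring_scope.

Section KC.
Variables (k : fieldType) (X : finType) (j : nat).
Local Notation T := (kbasis_type X j).

Lemma kcoef_nz (x y : T) : kcoef k x y != 0 ->
  exists2 v, v \in x.1 &
    (y.1 = x.1 :\ v /\ forall u, (y.2 u : nat) = (x.2 u + (u == v))%N).
Proof.
move=> H.
case: (boolP [exists v in x.1, (y.1 == x.1 :\ v) &&
    [forall u, (y.2 u : nat) == (x.2 u + (u == v))%N]]).
  move=> /exists_inP [v Hv /andP [/eqP H1 /forallP H2]].
  by exists v => //; split => // u; apply/eqP; exact: H2.
move=> Hn; move: H; rewrite /kcoef big1 ?eqxx // => v Hv.
case: ifP => // Hc; case/negP: Hn; apply/exists_inP; exists v => //.
Qed.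

Lemma kcoef_one (x y : T) v : v \in x.1 -> y.1 = x.1 :\ v ->
  (forall u, (y.2 u : nat) = (x.2 u + (u == v))%N) -> kcoef k x y != 0.
Proof.
move=> Hv H1 H2; rewrite /kcoef (bigD1 v) //= big1 ?addr0.
  rewrite H1 eqxx /=.
  have -> : [forall u, (y.2 u : nat) == (x.2 u + (u == v))%N] by apply/forallP => u; rewrite H2.
  by rewrite signr_eq0.
move=> w /andP [Hw Hwv]; case: ifP => // /andP [/eqP Hy _].
have : v \in y.1 by rewrite Hy !inE eq_sym Hwv.
by rewrite H1 !inE eqxx.
Qed.

Definition cf (x : T) : {ffun X -> nat} := [ffun u => (x.2 u + (u \in x.1))%N].

Lemma kcoef_cf (x y : T) : kcoef k x y != 0 -> cf y = cf x.
Proof.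
case/kcoef_nz => v Hv [H1 H2]; apply/ffunP => u; rewrite !ffunE H2 H1 !inE.
by case: eqP => [->|]; rewrite ?Hv ?addn0 ?addn1 ?addnS.
Qed.

End KC.

End Part3.
Import Part3.

Module Part4.

Section Comb.
Variables (t : nat) (n : 'I_t -> nat) (alpha beta : 'I_t -> nat) (d : nat).
Local Notation X := (cmh_vertex n).
Local Notation edge := (cmh_edge n alpha beta d).

Definition blk (S : {set X}) (s : 'I_t) := [set w in S | tag w == s].

Lemma card_blk (S : {set X}) : #|S| = \sum_s #|blk S s|.
Proof.
rewrite -sum1_card (partition_big (fun w : X => tag w) xpredT) //=.
apply: eq_bigr => s _; rewrite -sum1_card; apply: eq_bigl => w; by rewrite !inE.
Qed.

Lemma blk_sub (S S' : {set X}) s : S \subset S' -> blk S s \subset blk S' s.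
Proof. move=> /subsetP H; apply/subsetP => w; rewrite !inE => /andP [/H -> ->] //. Qed.

Lemma edgeP E : edge E = (#|E| == d) && [forall s, alpha s <= #|blk E s| <= beta s].
Proof. by []. Qed.

Lemma card_exch (E : {set X}) u v : v \in E -> u \notin E ->
  #|u |: (E :\ v)| = #|E|.
Proof.
move=> Hv Hu; rewrite cardsU1 (cardsD1 v E) Hv !inE (negbTE Hu) andbF /=.
by rewrite add1n.
Qed.

Lemma blk_exch (E : {set X}) u v s : v \in E -> u \notin E ->
  #|blk (u |: (E :\ v)) s| + (tag v == s) = #|blk E s| + (tag u == s).
Proof.
move=> Hv Hu.
have H1 : blk (E :\ v) s = blk E s :\ v by apply/setP => w; rewrite !inE andbA.
have H2 : #|blk E s| = (tag v == s) + #|blk E s :\ v|.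
  by rewrite (cardsD1 v (blk E s)) !inE Hv.
case: (boolP (tag u == s)) => Hs.
  have -> : blk (u |: (E :\ v)) s = u |: blk (E :\ v) s.
    apply/setP => w; rewrite !inE; case: (eqVneq w u) => [->|] //=.
  rewrite cardsU1 H1 !inE (negbTE Hu) andbF /= H2; case: (tag v == s) => /=; lia.
have -> : blk (u |: (E :\ v)) s = blk (E :\ v) s.
  apply/setP => w; rewrite !inE; case: (eqVneq w u) => [->|] //=.
  by rewrite (negbTE Hs) (negbTE Hu) !andbF.
rewrite H1 H2; case: (tag v == s) => /=; lia.
Qed.

Lemma edge_exch (E : {set X}) u v : edge E -> v \in E -> u \notin E ->
  (tag u = tag v \/
   (alpha (tag v) < #|blk E (tag v)| /\ #|blk E (tag u)| < beta (tag u))) ->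
  edge (u |: (E :\ v)).
Proof.
move=> /andP [HE /forallP Hs0] Hv Hu Hc; rewrite edgeP card_exch // HE /=.
have Hs : forall s, alpha s <= #|blk E s| <= beta s := Hs0.
apply/forallP => s; have := blk_exch s Hv Hu.
case: Hc => [Htag|[Hc1 Hc2]].
  rewrite Htag => H.
  by move/eqP: H; rewrite eqn_add2r => /eqP ->; rewrite Hs.
case: (eqVneq (tag v) s) => [Hvs|Hvs]; case: (eqVneq (tag u) s) => [Hus|Hus] /= H.
- by move/eqP: H; rewrite eqn_add2r => /eqP ->; rewrite Hs.
- subst s; move: (Hs (tag v)) => /andP [Ha Hb].
  set a := #|blk (u |: (E :\ v)) (tag v)| in H *; set b := #|blk E (tag v)| in H Ha Hb Hc1.
  set al := alpha (tag v) in Ha Hc1 *; set be := beta (tag v) in Hb *.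
  apply/andP; split; lia.
- subst s; move: (Hs (tag u)) => /andP [Ha Hb].
  set a := #|blk (u |: (E :\ v)) (tag u)| in H *; set b := #|blk E (tag u)| in H Ha Hb Hc2.
  set al := alpha (tag u) in Ha *; set be := beta (tag u) in Hb Hc2 *.
  apply/andP; split; lia.
- by move/eqP: H; rewrite eqn_add2r => /eqP ->; rewrite Hs.
Qed.

Definition rstar (dv : 'I_t -> option X) (B : {set X}) : option 'I_t :=
  if [pick r | (dv r != None) && ((beta r <= #|blk B r|) || (#|blk B r| + 1 < alpha r))]
    is Some r then Some r
  else if [pick r | (dv r != None) && (alpha r <= #|blk B r|)] is Some r then Some r
  else [pick r | dv r != None].

Lemma rstar_spec dv B r : rstar dv B = Some r ->
  dv r != None /\
  [\/ (beta r <= #|blk B r|) || (#|blk B r| + 1 < alpha r),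
      (alpha r <= #|blk B r|) /\ (forall s, dv s != None ->
          ~~ ((beta s <= #|blk B s|) || (#|blk B s| + 1 < alpha s))) |
      (forall s, dv s != None ->
          ~~ ((beta s <= #|blk B s|) || (#|blk B s| + 1 < alpha s)) /\
          ~~ (alpha s <= #|blk B s|))].
Proof.
rewrite /rstar; case: pickP => [r1 /andP [H1 H2] [<-]|Hn1]; first by split => //; constructor 1.
case: pickP => [r2 /andP [H1 H2] [<-]|Hn2].
  split => //; constructor 2; split; first exact: H2.
  by move=> s Hs; move: (Hn1 s); rewrite /= Hs /= => ->.
case: pickP => [r3 H3 [<-]|] //; split => //; constructor 3 => s Hs.
by move: (Hn1 s) (Hn2 s); rewrite /= Hs /= => -> ->.
Qed.

Lemma rstar_some dv B : (exists r, dv r != None) -> rstar dv B != None.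
Proof.
case=> r Hr; rewrite /rstar; case: pickP => [//|_]; case: pickP => [//|_].
by case: pickP => [//|/(_ r)]; rewrite Hr.
Qed.

Definition Vset (dv : 'I_t -> option X) (W : {set X}) :=
  [set u in W | dv (tag u) == Some u].

Lemma core (dv : 'I_t -> option X) (W G E : {set X}) r v :
  (forall r u, dv r = Some u -> u \in W /\ tag u = r) ->
  (forall u, u \in W -> dv (tag u) != None) ->
  G \subset W ->
  rstar dv (G :\: Vset dv W) = Some r -> dv r = Some v -> v \notin G ->
  (forall E', edge E' -> ~~ (E' \subset G)) ->
  d <= #|G| -> edge E -> E \subset v |: G -> False.
Proof.
move=> Hdv1 Hdv2 HGW Hr Hv HvG Hind HdG HE HEvG.
set B := G :\: Vset dv W in Hr.
have HBG : B \subset G by apply: subsetDl.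
have HvE : v \in E.
  apply: contraT => HvE; case/negP: (Hind E HE); apply/subsetP => w Hw.
  move/subsetP: HEvG => /(_ w Hw); rewrite !inE; case/orP => // /eqP Ew.
  by rewrite -Ew Hw in HvE.
have HEG : E :\ v \subset G.
  apply/subsetP => w; rewrite !inE => /andP [Hwv Hw].
  by move/subsetP: HEvG => /(_ w Hw); rewrite !inE (negbTE Hwv).
have Hex : forall u, u \in G -> u \notin E ->
    (tag u = tag v \/
     (alpha (tag v) < #|blk E (tag v)| /\ #|blk E (tag u)| < beta (tag u))) -> False.
  move=> u Hu HuE Hc; apply: (negP (Hind _ (edge_exch HE HvE HuE Hc))).
  by rewrite subUset sub1set Hu HEG.
have [HvW Htv] := Hdv1 _ _ Hv.
have HG1 : forall s w, dv s = Some w -> blk G s \subset w |: blk B s.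
  move=> s w Hs; apply/subsetP => u; rewrite !inE => /andP [HuG /eqP Hus].
  rewrite HuG Hus eqxx !andbT /=.
  case: (eqVneq u w) => //= Huw; rewrite Hs andbC; case: eqP => //= -[Ewu].
  by rewrite Ewu eqxx in Huw.
have HG2 : forall s w, dv s = Some w -> #|blk G s| <= #|blk B s| + 1.
  move=> s w Hs; apply: leq_trans (subset_leq_card (HG1 _ _ Hs)) _.
  by rewrite cardsU1 addnC leq_add2l leq_b1.
have HG3 : forall s w, dv s = Some w -> w \notin G -> blk G s = blk B s.
  move=> s w Hs HwG; apply/eqP; rewrite eqEsubset (blk_sub s HBG) andbT.
  apply/subsetP => u Hu; move/subsetP: (HG1 _ _ Hs) => /(_ u Hu).
  rewrite !inE; case/orP => // /eqP Eu; subst u.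
  by move: Hu; rewrite inE (negbTE HwG).
have HG4 : forall s, dv s = None -> blk G s = set0.
  move=> s Hs; apply/setP => u; rewrite !inE; apply/negP => /andP [Hu /eqP Hus].
  by have := Hdv2 u (subsetP HGW u Hu); rewrite Hus Hs.
have HGr : blk G r = blk B r by apply: (HG3 _ _ Hv HvG).
have HEr : blk E r \subset v |: blk G r.
  apply/subsetP => u; rewrite !inE => /andP [Hu Hur].
  move/subsetP: HEvG => /(_ u Hu); rewrite !inE => /orP [->//|->].
  by rewrite Hur orbT.
have HvEr : v \in blk E r by rewrite inE HvE Htv eqxx.
have HcEr : #|blk E r| <= #|blk G r| + 1.
  apply: leq_trans (subset_leq_card HEr) _.
  by rewrite cardsU1 addnC leq_add2l leq_b1.
move: HE; rewrite edgeP => /andP [/eqP HEd /forallP HEs0].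
have HEs : forall s, alpha s <= #|blk E s| <= beta s := HEs0.
have [Har Hbr] := andP (HEs r).
have Hsame : (exists2 u, u \in blk G r & u \notin E) -> False.
  case=> u; rewrite inE => /andP [HuG /eqP Hur] HuE.
  by apply: (Hex u HuG HuE); left; rewrite Hur Htv.
case: (rstar_spec Hr) => Hrn [].
-
  case/orP => Hm.
    apply: Hsame; apply/exists_inP; apply: contraT; rewrite negb_exists_in.
    move/forall_inP => Hall.
    have Hsub : blk G r \subset blk E r :\ v.
      apply/subsetP => u Hu; have := Hall u Hu; rewrite negbK => HuE.
      rewrite !inE HuE; move: Hu; rewrite inE => /andP [HuG ->]; rewrite andbT.
      by rewrite andbT; apply: contraNneq HvG => <-.
    have := subset_leq_card Hsub; rewrite (cardsD1 v (blk E r)) HvEr in Hbr.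
    rewrite HGr; set a := #|blk B r| in Hm *; set b := #|blk E r :\ v| in Hbr *.
    set be := beta r in Hbr Hm; lia.
  move: Har HcEr; rewrite HGr; set a := #|blk B r| in Hm *; set b := #|blk E r|.
  set al := alpha r in Hm *; lia.
-
  case=> Ham Hnn.
  case: (boolP [exists u in blk G r, u \notin E]) => [/exists_inP [u Hu HuE]|Hall].
    by apply: Hsame; exists u.
  have HsubE : v |: blk G r \subset blk E r.
    rewrite subUset sub1set HvEr /=; apply/subsetP => u Hu.
    move: Hall; rewrite negb_exists_in => /forall_inP /(_ u Hu); rewrite negbK => HuE.
    by move: Hu; rewrite !inE HuE => /andP [_ ->].
  have HcE : #|blk G r| + 1 <= #|blk E r|.
    apply: leq_trans (subset_leq_card HsubE); rewrite cardsU1 inE (negbTE HvG) /=.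
    by rewrite addnC.
  have [u HuG HuE] : exists2 u, u \in G & u \notin E.
    apply/exists_inP; apply: contraT; rewrite negb_exists_in => /forall_inP HGE.
    have Hsub : G \subset E :\ v.
      apply/subsetP => u Hu; rewrite !inE; have := HGE u Hu; rewrite negbK => ->.
      by rewrite andbT; apply: contraNneq HvG => <-.
    have := subset_leq_card Hsub; have := cardsD1 v E; rewrite HvE HEd.
    by move=> Hd Hg; move: (leq_trans HdG Hg); rewrite Hd /= add1n ltnn.
  have Hur : tag u != r.
    apply/negP => /eqP Hur; move: Hall; rewrite negb_exists_in => /forall_inP.
    by move=> /(_ u); rewrite inE HuG Hur eqxx HuE => /(_ isT).
  set s := tag u in Hur *.
  have HuW : u \in W by apply: (subsetP HGW).
  case Hds : (dv s) => [w|]; last by have := Hdv2 u HuW; rewrite -/s Hds.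
  have HEsG : u |: blk E s \subset blk G s.
    rewrite subUset sub1set inE HuG eqxx /=; apply/subsetP => w' ; rewrite !inE.
    move=> /andP [Hw'E /eqP Hw's]; rewrite Hw's eqxx andbT.
    move/subsetP: HEG => /(_ w'); rewrite !inE Hw'E andbT; apply.
    by apply: contraNneq Hur => Ew; rewrite -Hw's Ew Htv.
  have := subset_leq_card HEsG; rewrite cardsU1 inE (negbTE HuE) /=.
  have := HG2 _ _ Hds; have := Hnn s; rewrite Hds => /(_ isT).
  rewrite negb_or -!ltnNge => /andP [Hb1 _] H2 H3.
  apply: (Hex u HuG HuE); right; split.
    rewrite Htv; move: Ham HcE; rewrite HGr => H1 H4; apply: leq_ltn_trans H1 _.
    by rewrite -addn1.
  by rewrite -/s; apply: leq_trans H3 _; apply: leq_trans H2 _; rewrite addn1.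
-
  move=> Hall.
  have Hs : forall s, #|blk G s| + (s == r) <= #|blk E s|.
    move=> s; have [Has _] := andP (HEs s); apply: leq_trans Has.
    case Hds : (dv s) => [w|].
      have [Hx Hy] : ~~ ((beta s <= #|blk B s|) || (#|blk B s| + 1 < alpha s)) /\
          ~~ (alpha s <= #|blk B s|) by apply: Hall; rewrite Hds.
      move: Hx Hy; rewrite negb_or -!ltnNge => /andP [_ Ha1] Ha2.
      case: (eqVneq s r) => [Esr|Nsr] /=.
        by subst s; rewrite HGr addn1.
      by rewrite addn0; apply: leq_trans (HG2 _ _ Hds) _; rewrite addn1.
    rewrite HG4 // cards0 /=; case: (eqVneq s r) => [Esr|//].
    by rewrite Esr Hv in Hds.
  have := @leq_sum _ (index_enum 'I_t) xpredT _ _ (fun s _ => Hs s); rewrite big_split /= -!card_blk HEd.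
  rewrite (bigD1 r) //= eqxx big1 => [|s /negbTE -> //].
  by rewrite addn0 addn1 => H; have := leq_trans H HdG; rewrite ltnn.
Qed.

End Comb.

End Part4.
Import Part4.

Module Part5.
Import GRing.Theory.
Local Open Scope ring_scope.

Section Cells.
Variables (t : nat) (n : 'I_t -> nat) (alpha beta : 'I_t -> nat) (d : nat).
Local Notation X := (cmh_vertex n).
Local Notation edge := (cmh_edge n alpha beta d).
Variable j : nat.
Local Notation T := (kbasis_type X j).
Local Notation K := (kbasis edge).

Definition nsq (cc : {ffun X -> nat}) := [pick u | 1 < cc u]%N.
Definition dvc (cc : {ffun X -> nat}) (r : 'I_t) := [pick u | (0 < cc u)%N && (tag u == r)].
Definition Wc (cc : {ffun X -> nat}) := [set u | 0 < cc u]%N.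
Definition Vc cc := Vset (dvc cc) (Wc cc).
Definition Gx (x : T) := [set u | 0 < x.2 u]%N.
Definition base (x : T) := Gx x :\: Vc (cf x).
Definition sel (x : T) : option X :=
  if nsq (cf x) is Some v then Some v
  else obind (dvc (cf x)) (rstar alpha beta (dvc (cf x)) (base x)).
Definition key (x : T) := #|base x|.
Definition Up (x : T) := if sel x is Some v then v \notin x.1 else false.
Definition Down (x : T) := if sel x is Some v then
   (v \in x.1) && ~~ in_edge_ideal edge (fun u => x.2 u + (u == v))%N else false.
Definition U (x : T) : T := if sel x is Some v then
   (v |: x.1, [ffun u => inord (x.2 u - (u == v))]) else x.
Definition D (x : T) : T := if sel x is Some v then
   (x.1 :\ v, [ffun u => inord (x.2 u + (u == v))]) else x.

Lemma dvc_spec (cc : {ffun X -> nat}) r u : dvc cc r = Some u -> (0 < cc u)%N /\ tag u = r.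
Proof. by rewrite /dvc; case: pickP => // w /andP [H1 /eqP H2] [<-]. Qed.

Lemma dvc_some (cc : {ffun X -> nat}) u : (0 < cc u)%N -> dvc cc (tag u) != None.
Proof. by move=> H; rewrite /dvc; case: pickP => // /(_ u); rewrite H eqxx. Qed.

Lemma nsq_none (cc : {ffun X -> nat}) : nsq cc = None -> forall u, (cc u <= 1)%N.
Proof. by rewrite /nsq; case: pickP => // H _ u; have := H u; rewrite /= ltnNge => /negbFE. Qed.

Lemma nsq_some (cc : {ffun X -> nat}) v : nsq cc = Some v -> (1 < cc v)%N.
Proof. by rewrite /nsq; case: pickP => // w H [<-]. Qed.

Lemma sel_pos x v : sel x = Some v -> (0 < cf x v)%N.
Proof.
rewrite /sel; case E: (nsq (cf x)) => [w|].
  by move=> [<-]; have := nsq_some E; apply: leq_trans.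
case: (rstar _ _ _ _) => //= r /dvc_spec [] //.
Qed.

Lemma sel_V x v : nsq (cf x) = None -> sel x = Some v -> v \in Vc (cf x).
Proof.
rewrite /sel => ->; case: (rstar _ _ _ _) => //= r Hr.
have [H1 H2] := dvc_spec Hr; rewrite /Vc /Vset !inE H1 /= H2 Hr //.
Qed.

Lemma cfE (x : T) u : cf x u = (x.2 u + (u \in x.1))%N.
Proof. by rewrite ffunE. Qed.

Lemma kbP i (x : T) : x \in K i j ->
  [/\ (i <= j)%N, #|x.1| = i, (\sum_u (x.2 u : nat))%N = (j - i)%N &
      ~~ in_edge_ideal edge (fun u => x.2 u : nat)].
Proof. by rewrite inE => /and4P [H1 /eqP H2 /eqP H3 H4]. Qed.

Lemma kb_bound i (x : T) u : x \in K i j -> (x.2 u <= j - i)%N.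
Proof.
case/kbP => _ _ <- _; rewrite (bigD1 u) //=; exact: leq_addr.
Qed.

Lemma iei_mono (a b : X -> nat) : in_edge_ideal edge a ->
  (forall u, 0 < a u -> 0 < b u)%N -> in_edge_ideal edge b.
Proof.
move=> /existsP [E /andP [HE /forall_inP H]] Hab; apply/existsP; exists E.
by rewrite HE /=; apply/forall_inP => u Hu; apply: Hab; apply: H.
Qed.

Lemma iei_ext (a b : X -> nat) : (forall u, (0 < a u) = (0 < b u))%N ->
  in_edge_ideal edge a = in_edge_ideal edge b.
Proof.
move=> H; apply/idP/idP => Hi; apply: (iei_mono Hi) => u; by rewrite H.
Qed.

Lemma U1 (x : T) v : sel x = Some v -> (U x).1 = v |: x.1.
Proof. by rewrite /U => ->. Qed.

Lemma U2 (x : T) v u : sel x = Some v -> ((U x).2 u : nat) = (x.2 u - (u == v))%N.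
Proof.
rewrite /U => -> /=; rewrite ffunE inordK //.
exact: leq_ltn_trans (leq_subr _ _) (ltn_ord _).
Qed.

Lemma D1 (x : T) v : sel x = Some v -> (D x).1 = x.1 :\ v.
Proof. by rewrite /D => ->. Qed.

Lemma D2 i (x : T) v u : (1 <= i)%N -> x \in K i j -> sel x = Some v ->
  ((D x).2 u : nat) = (x.2 u + (u == v))%N.
Proof.
move=> Hi HK; rewrite /D => -> /=; rewrite ffunE inordK //.
have H := kb_bound u HK; have [Hij _ _ _] := kbP HK.
rewrite ltnS; apply: leq_trans (leq_add H (leq_b1 _)) _.
move: Hi Hij; clear; lia.
Qed.

Lemma Up_pos i (x : T) v : x \in K i j -> sel x = Some v -> v \notin x.1 -> (0 < x.2 v)%N.
Proof. by move=> _ Hs Hv; have := sel_pos Hs; rewrite cfE (negbTE Hv) addn0. Qed.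

Lemma sum_pick (a : X -> nat) v : (\sum_u a u = a v + \sum_(u | u != v) a u)%N.
Proof. by rewrite (bigD1 v). Qed.

Lemma Up_valid i (x : T) : x \in K i j -> Up x -> U x \in K i.+1 j.
Proof.
rewrite /Up; case Hs: (sel x) => [v|] // HK Hv.
have Hpos := Up_pos HK Hs Hv.
have [Hij Hc Hsum Hstd] := kbP HK.
rewrite inE (U1 Hs); apply/and4P; split.
- by rewrite -subn_gt0 -Hsum (sum_pick _ v); exact: ltn_addr.
- by rewrite cardsU1 Hv Hc.
- rewrite (eq_bigr (fun u => x.2 u - (u == v))%N); last by move=> u _; rewrite (U2 _ Hs).
  rewrite (sum_pick _ v) eqxx.
  rewrite (eq_bigr (fun u => x.2 u : nat)); last by move=> u /negbTE ->; rewrite subn0.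
  move: Hsum; rewrite (sum_pick _ v) => Hsum.
  apply/eqP; rewrite subnS -Hsum; move: Hpos.
  set a := (x.2 v : nat); set b := (\sum_(u | u != v) x.2 u)%N; lia.
- apply: contra Hstd => H; apply: (iei_mono H) => u; rewrite (U2 _ Hs).
  move=> H0; exact: leq_trans H0 (leq_subr _ _).
Qed.

Lemma Down_valid i (x : T) : (1 <= i)%N -> x \in K i j -> Down x -> D x \in K i.-1 j.
Proof.
rewrite /Down; case Hs: (sel x) => [v|] // Hi HK /andP [Hv Hstd'].
have [Hij Hc Hsum Hstd] := kbP HK.
rewrite inE (D1 Hs); apply/and4P; split.
- exact: leq_trans (leq_pred i) Hij.
- by move: Hc; rewrite (cardsD1 v x.1) Hv add1n => <-.
- rewrite (eq_bigr (fun u => x.2 u + (u == v))%N); last by move=> u _; rewrite (D2 _ Hi HK Hs).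
  rewrite big_split /= Hsum (bigD1 v) //= eqxx big1 => [|u /negbTE -> //].
  by apply/eqP; move: Hi Hij; lia.
- by rewrite (@iei_ext _ (fun u => x.2 u + (u == v))%N) // => u; rewrite (D2 _ Hi HK Hs).
Qed.

Variable k : fieldType.

Lemma Up_diag i (x : T) : x \in K i j -> Up x -> kcoef k (U x) x != 0.
Proof.
rewrite /Up; case Hs: (sel x) => [v|] // HK Hv.
have Hpos := Up_pos HK Hs Hv.
apply: (@kcoef_one _ _ _ _ _ v); rewrite ?(U1 Hs) ?setU1K ?setU11 //.
move=> u; rewrite (U2 _ Hs); case: eqVneq => [->|_]; last by rewrite subn0 addn0.
by rewrite subn1 addn1 prednK.
Qed.

Lemma Down_diag i (x : T) : (1 <= i)%N -> x \in K i j -> Down x -> kcoef k x (D x) != 0.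
Proof.
rewrite /Down; case Hs: (sel x) => [v|] // Hi HK /andP [Hv _].
apply: (@kcoef_one _ _ _ _ _ v); rewrite ?(D1 Hs) //.
by move=> u; rewrite (D2 _ Hi HK Hs).
Qed.

Lemma sqf0 (x : T) u : nsq (cf x) = None -> u \in x.1 -> x.2 u = 0 :> nat.
Proof.
move=> Hn Hu; have := nsq_none Hn u; rewrite cfE Hu addn1 ltnS leqn0.
by move/eqP.
Qed.

Lemma pair_eq (x y : T) : x.1 = y.1 -> (forall u, (x.2 u : nat) = y.2 u) -> x = y.
Proof.
case: x y => [a1 a2] [b1 b2] /= -> H; congr pair; apply/ffunP => u; apply/val_inj; exact: H.
Qed.

Lemma sel_eq (x y : T) : cf y = cf x -> base y = base x -> sel y = sel x.
Proof. by move=> Hc Hb; rewrite /sel Hb Hc. Qed.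

Lemma base_eq (x y : T) (V : {set X}) w :
  (forall u, u \notin V -> u != w -> (0 < y.2 u) = (0 < x.2 u))%N ->
  (0 < y.2 w)%N -> x.2 w = 0 :> nat ->
  Gx y :\: V = if w \in V then Gx x :\: V else w |: (Gx x :\: V).
Proof.
move=> H1 H2 H3; apply/setP => u.
case: (boolP (w \in V)) => HwV; rewrite !inE.
  case: (boolP (u \in V)) => //= HuV.
  by rewrite H1 //; apply: contraNneq HuV => ->.
case: (eqVneq u w) => [->|Huw] /=; first by rewrite HwV H2.
case: (boolP (u \in V)) => //= HuV; exact: H1.
Qed.

Lemma key_step (x : T) w : x.2 w = 0 :> nat -> w \notin Vc (cf x) ->
  #|w |: base x| = (key x).+1.
Proof.
by move=> H0 HwV; rewrite cardsU1 /key !inE H0 /= andbF /= add1n.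
Qed.

Lemma Tup i (x y : T) : x \in K i j -> y \in K i j -> Up x -> Up y ->
  kcoef k (U x) y != 0 -> y = x \/ (key x < key y)%N.
Proof.
move=> HKx HKy Hux; move: (Hux); rewrite /Up; case Hsx: (sel x) => [v|] // Hvx.
case Hsy: (sel y) => [v'|] // Hvy Hk.
have Hpos := Up_pos HKx Hsx Hvx.
have HUd := Up_diag HKx Hux.
have Hcf : cf y = cf x by rewrite (kcoef_cf Hk) (kcoef_cf HUd).
case: (kcoef_nz Hk) => w; rewrite (U1 Hsx) => Hw [Hy1 Hy2].
have Hy2' : forall u, (y.2 u : nat) = (x.2 u - (u == v) + (u == w))%N.
  by move=> u; rewrite Hy2 (U2 _ Hsx).
case: (eqVneq w v) => [Ewv|Nwv].
  left; apply: pair_eq; first by rewrite Hy1 Ewv setU1K.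
  move=> u; rewrite Hy2' Ewv; case: eqVneq => [->|_]; last by rewrite subn0 addn0.
  by rewrite subn1 addn1 prednK.
have Hvy1 : v \in y.1 by rewrite Hy1 !inE eq_sym Nwv eqxx.
case Hn: (nsq (cf x)) => [v0|].
  have Ev : v0 = v by move: Hsx; rewrite /sel Hn => -[].
  have Ev' : v0 = v' by move: Hsy; rewrite /sel Hcf Hn => -[].
  by subst; rewrite Hvy1 in Hvy.
have HvV : v \in Vc (cf x) := sel_V Hn Hsx.
have Hwx : w \in x.1 by move: Hw; rewrite !inE (negbTE Nwv).
have Hxw := sqf0 Hn Hwx.
have Hb : base y = if w \in Vc (cf x) then base x else w |: base x.
  rewrite /base Hcf; apply: base_eq => //.
    move=> u HuV Huw; rewrite Hy2' (negbTE Huw) addn0.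
    have -> : (u == v) = false by apply/negbTE; apply: contraNneq HuV => ->.
    by rewrite subn0.
  by rewrite Hy2' eqxx addn1.
move: Hb; case: ifP => HwV Hb.
  have := sel_eq Hcf Hb; rewrite Hsy Hsx => -[Ev]; subst v'.
  by rewrite Hvy1 in Hvy.
by right; rewrite /key Hb key_step // negbT.
Qed.

Lemma Tdown i (x y : T) : (1 <= i)%N -> x \in K i j -> y \in K i j -> Down x -> Down y ->
  kcoef k x (D y) != 0 -> y = x \/ (key x < key y)%N.
Proof.
move=> Hi HKx HKy Hdx Hdy; move: (Hdx) (Hdy).
rewrite /Down; case Hsx: (sel x) => [v|] // /andP [Hvx _].
case Hsy: (sel y) => [v'|] // /andP [Hvy _] Hk.
have HDd := Down_diag Hi HKy Hdy.
have Hcf : cf y = cf x by rewrite -(kcoef_cf Hk) (kcoef_cf HDd).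
case: (kcoef_nz Hk) => w Hw; rewrite (D1 Hsy) => [[Hy1 Hy2]].
have Hy2' : forall u, (y.2 u + (u == v') = x.2 u + (u == w))%N.
  by move=> u; rewrite -Hy2 (D2 _ Hi HKy Hsy).
case: (eqVneq w v') => [Ewv|Nwv].
  left; apply: pair_eq.
    by rewrite -(setD1K Hvy) Hy1 Ewv setD1K // -Ewv.
  by move=> u; have := Hy2' u; rewrite Ewv => /eqP; rewrite eqn_add2r => /eqP.
have Hxv' : (0 < x.2 v')%N.
  by have := Hy2' v'; rewrite eqxx eq_sym (negbTE Nwv) addn0 addn1 => <-.
case Hn: (nsq (cf x)) => [v0|].
  have Ev : v0 = v by move: Hsx; rewrite /sel Hn => -[].
  have Ev' : v0 = v' by move: Hsy; rewrite /sel Hcf Hn => -[].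
  subst v v'; have : v0 \in x.1 :\ w by rewrite !inE Hvx andbT; apply: contraNneq Nwv => ->.
  by rewrite -Hy1 !inE eqxx.
have HvV : v' \in Vc (cf x) by rewrite -Hcf; apply: sel_V; rewrite ?Hcf.
have Hvv : v' != v.
  apply/eqP => E; subst v'; have := sqf0 Hn Hvx.
  by move=> H0; rewrite H0 in Hxv'.
have Hxw := sqf0 Hn Hw.
have Hb : base y = if w \in Vc (cf x) then base x else w |: base x.
  rewrite /base Hcf; apply: base_eq => //.
    move=> u HuV Huw; have := Hy2' u; rewrite (negbTE Huw) addn0.
    have -> : (u == v') = false by apply/negbTE; apply: contraNneq HuV => ->.
    by rewrite addn0 => ->.
  by have := Hy2' w; rewrite eqxx (negbTE Nwv) addn0 Hxw => ->.
move: Hb; case: ifP => HwV Hb.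
  by have := sel_eq Hcf Hb; rewrite Hsy Hsx => -[Ev]; rewrite Ev eqxx in Hvv.
by right; rewrite /key Hb key_step // negbT.
Qed.

Lemma card_Gx (x : T) : nsq (cf x) = None -> #|Gx x| = (\sum_u (x.2 u : nat))%N.
Proof.
move=> Hn; rewrite -sum1_card big_mkcond /=; apply: eq_bigr => u _.
have := nsq_none Hn u; rewrite cfE inE.
move: (x.2 u : nat) (u \in x.1) => a b; by case: a => [|[|a]] //; case: b.
Qed.

Lemma cover i (x : T) : (1 <= i)%N -> j != (i + (d - 1))%N -> x \in K i j -> Up x || Down x.
Proof.
move=> Hi Hj HK; have [Hij Hc Hsum Hstd] := kbP HK.
rewrite /Up /Down.
case Hn: (nsq (cf x)) => [v|].
  have Hs : sel x = Some v by rewrite /sel Hn.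
  rewrite Hs; case: (boolP (v \in x.1)) => Hv //=.
  rewrite (@iei_ext _ (fun u => x.2 u : nat)) // => u.
  case: eqVneq => [->|_]; rewrite ?addn0 //.
  have := nsq_some Hn; rewrite cfE Hv addn1 ltnS => H.
  by rewrite H.
have [u0 Hu0] : exists u0, u0 \in x.1.
  by apply/set0Pn; rewrite -card_gt0 Hc.
have Hdv : dvc (cf x) (tag u0) != None.
  by apply: dvc_some; rewrite cfE Hu0 addn1.
have := rstar_some alpha beta (base x) (ex_intro (fun r => dvc (cf x) r != None) _ Hdv).
case E: (rstar _ _ _ _) => [r|] // _.
have [Hrn _] := rstar_spec E.
case Ed: (dvc (cf x) r) => [v|]; last by rewrite Ed in Hrn.
have Hs : sel x = Some v by rewrite /sel Hn E /= Ed.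
rewrite Hs; case: (boolP (v \in x.1)) => Hv //=.
apply/negP => /existsP [E0 /andP [HE /forall_inP Hpos]].
have HGE : E0 \subset v |: Gx x.
  apply/subsetP => u Hu; have := Hpos u Hu; rewrite !inE.
  by case: eqVneq => [->|_] //=; rewrite addn0 => ->.
have HdG : (d <= #|Gx x|)%N.
  move: (HE) => /andP [/eqP HEd _].
  have := subset_leq_card HGE; rewrite cardsU1 HEd card_Gx // Hsum.
  move: Hj Hij; clear; case: (_ \notin _) => /=; lia.
apply: (@core _ _ alpha beta d (dvc (cf x)) (Wc (cf x)) (Gx x) E0 r v) => //.
- by move=> r' u /dvc_spec [H1 H2]; rewrite inE H1.
- by move=> u; rewrite inE; exact: dvc_some.
- apply/subsetP => u; rewrite !inE cfE => H; exact: leq_trans H (leq_addr _ _).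
- by rewrite inE sqf0.
- move=> E' HE'; apply/negP => Hsub; case/negP: Hstd; apply/existsP; exists E'.
  rewrite HE' /=; apply/forall_inP => u Hu; have := subsetP Hsub u Hu; by rewrite inE.
Qed.

End Cells.

End Part5.
Import Part5.

Module Part6.

Lemma main_vanish (k : fieldType) (t : nat) (n : 'I_t -> nat)
    (alpha beta : 'I_t -> nat) (d : nat) (i j : nat) :
  (1 <= i)%N -> j <> (i + (d - 1))%N ->
  betti k (cmh_edge n alpha beta d) i j = 0%N.
Proof.
move=> Hi /eqP Hj.
apply: (@betti0 k _ _ i j (@Up _ n alpha beta j) (@Down _ n alpha beta d j)
   (@U _ n alpha beta j) (@D _ n alpha beta j) (@key _ n j)).
- by move=> x; apply: cover.
- by move=> x; apply: Up_valid.
- by move=> x; apply: Down_valid.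
- by move=> x; apply: Up_diag.
- by move=> x; apply: Down_diag.
- by move=> x y; apply: Tup.
- by move=> x y; apply: Tdown.
Qed.



End Part6.
Import Part6.

Theorem theorem3p21 (k : fieldType) (t : nat) (n : 'I_t -> nat)
    (alpha beta : 'I_t -> nat) (d : nat) :
  (1 <= t)%N ->
  (forall s : 'I_t, 1 <= n s)%N ->
  (2 <= d)%N ->
  (forall s : 'I_t, alpha s <= beta s <= n s)%N ->
  linear_resolution (betti k (cmh_edge n alpha beta d)) /\
  (forall i j : nat, (1 <= i)%N ->
     betti k (cmh_edge n alpha beta d) i j <> 0%N -> j = (i + (d - 1))%N).
Proof.
move=> _ _ Hd _; split.
  exists d => i j Hi Hj; apply: main_vanish => // E; apply: Hj; rewrite E.
  by move: Hd; clear; lia.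
move=> i j Hi Hb; apply/eqP; apply/negP => Hj; apply: Hb; apply: main_vanish => // E.
by rewrite E eqxx in Hj.
Qed.
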